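(* Let $Q$ be a connected quandle, $S$ a set, $\theta:Q\times Q\to\mathrm{Sym}_S$ a quandle cocycle, $E=Q\times_\theta S$ and $p:E\to Q$, $(x,a)\mapsto x$. The following are equivalent: (i) $\theta$ is cohomologous to the trivial cocycle; (ii) whenever $(x,a),(x,b)\in E$ lie in the same orbit of $\mathrm{LMlt}(E)$, then $a=b$ (i.e. $\ker p\wedge\mathcal{O}_{\mathrm{LMlt}(E)}=0_E$); (iii) for every $u\in E$, the restriction of $p$ to the orbit $u^{\mathrm{LMlt}(E)}$ is a quandle isomorphism $u^{\mathrm{LMlt}(E)}\to Q$.
   Context: A quandle is a set $Q$ with a binary operation $*$ such that every left translation $L_x:y\mapsto x*y$ is bijective, $x*(y*z)=(x*y)*(x*z)$ and $x*x=x$. $\mathrm{LMlt}(Q)=\langle L_x:x\in Q\rangle$; $Q$ is connected if $\mathrm{LMlt}(Q)$ is transitive. A quandle cocycle with values in $\mathrm{Sym}_S$ is $\theta:Q\times Q\to\mathrm{Sym}_S$ with $\theta_{x*y,x*z}\theta_{x,z}=\theta_{x,y*z}\theta_{y,z}$ and $\theta_{x,x}=1$; $\theta$ is cohomologous to the trivial cocycle $\mathbf{1}$ (constantly the identity) if there is $\gamma:Q\to\mathrm{Sym}_S$ with $\theta_{x,y}=\gamma_{x*y}\gamma_y^{-1}$ for all $x,y$. $Q\times_\theta S$ is the quandle on $Q\times S$ with $(x,a)*(y,b)=(x*y,\theta_{x,y}(b))$. Orbits of $\mathrm{LMlt}(E)$ are subquandles of $E$. *)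

(* Defs.v *)
From mathcomp Require Import all_boot.
Set Implicit Arguments. Unset Strict Implicit. Unset Printing Implicit Defensive.

Record is_quandle (T : Type) (op : T -> T -> T) : Prop := {
  quandle_lbij : forall x, bijective (op x);
  quandle_ldist : forall x y z, op x (op y z) = op (op x y) (op x z);
  quandle_idem : forall x, op x x = x }.

(* Orbit relation of LMlt = <L_x : x in T>: v is reachable from u by
   applying left translations L_x and their inverses L_x^{-1}. *)
Inductive lorbit (T : Type) (op : T -> T -> T) (u : T) : T -> Prop :=
  | lorbit_refl : lorbit op u u
  | lorbit_L : forall x v, lorbit op u v -> lorbit op u (op x v)
  | lorbit_Linv : forall x v w, lorbit op u v -> op x w = v -> lorbit op u w.

Definition connected (T : Type) (op : T -> T -> T) : Prop :=
  forall x y, lorbit op x y.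

(* theta : Q x Q -> Sym_S; composition is functional composition. *)
Definition quandle_cocycle (Q S : Type) (op : Q -> Q -> Q)
  (theta : Q -> Q -> S -> S) : Prop :=
  (forall x y, bijective (theta x y)) /\
  (forall x y z c, theta (op x y) (op x z) (theta x z c)
                   = theta x (op y z) (theta y z c)) /\
  (forall x c, theta x x c = c).

Definition cohomologous_trivial (Q S : Type) (op : Q -> Q -> Q)
  (theta : Q -> Q -> S -> S) : Prop :=
  exists (gamma gammainv : Q -> S -> S),
    (forall x, cancel (gamma x) (gammainv x) /\ cancel (gammainv x) (gamma x)) /\
    (forall x y b, theta x y b = gamma (op x y) (gammainv y b)).

Definition ext_op (Q S : Type) (op : Q -> Q -> Q) (theta : Q -> Q -> S -> S)
  (u v : Q * S) : Q * S := (op u.1 v.1, theta u.1 v.1 v.2).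

Definition orbit_sub (T : Type) (op : T -> T -> T) (u : T) :=
  {v : T | lorbit op u v}.

Definition orbit_op (T : Type) (op : T -> T -> T) (u : T)
  (v w : orbit_sub op u) : orbit_sub op u :=
  exist _ (op (proj1_sig v) (proj1_sig w)) (lorbit_L (proj1_sig v) (proj2_sig w)).

Definition quandle_iso (A B : Type) (opA : A -> A -> A) (opB : B -> B -> B)
  (f : A -> B) : Prop :=
  bijective f /\ forall a b, f (opA a b) = opB (f a) (f b).

(* Main.v *)
From Stdlib Require Import Classical ClassicalEpsilon ProofIrrelevance.
Require Import Defs.
From mathcomp Require Import all_boot.
Set Implicit Arguments.


Section Aux.
Variables (T : Type) (op : T -> T -> T).

Lemma lorbit_trans u v w : lorbit op u v -> lorbit op v w -> lorbit op u w.
Proof.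
move=> Huv Hvw; elim: Hvw => [|x v' w' IH|x v' w' _ IH Heq] //.
  exact: lorbit_L.
exact: (lorbit_Linv IH Heq).
Qed.

Lemma lorbit_sym u v : lorbit op u v -> lorbit op v u.
Proof.
elim=> [|x v' H IH|x v' w H IH Heq]; first exact: lorbit_refl.
  apply: lorbit_trans IH.
  exact: (lorbit_Linv (lorbit_refl _ _) (erefl _)).
apply: lorbit_trans IH; rewrite -Heq; apply: lorbit_L; exact: lorbit_refl.
Qed.
End Aux.

Lemma lift (Q S : Type) (op : Q -> Q -> Q) (theta : Q -> Q -> S -> S) :
  quandle_cocycle op theta ->
  forall y z, lorbit op y z -> forall a, exists b, lorbit (ext_op op theta) (y, a) (z, b).
Proof.
move=> [Hb _] y z; elim=> [|x v H IH|x v w H IH Heq] a.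
- exists a; exact: lorbit_refl.
- have [b Hb'] := IH a; exists (theta x v b).
  exact: (lorbit_L (x, b) Hb').
- have [b Hb'] := IH a; have [g _ gK] := Hb x w.
  exists (g b); apply: (@lorbit_Linv _ _ _ (x, b) _ (w, g b) Hb').
  by rewrite /ext_op /= gK Heq.
Qed.

Theorem proposition2p3 (Q S : Type) (op : Q -> Q -> Q)
  (theta : Q -> Q -> S -> S) :
  is_quandle op -> connected op -> quandle_cocycle op theta ->
  let E_op := ext_op op theta in
  let p := fun u : Q * S => u.1 in
  (cohomologous_trivial op theta <->
   (forall (x : Q) (a b : S), lorbit E_op (x, a) (x, b) -> a = b)) /\
  ((forall (x : Q) (a b : S), lorbit E_op (x, a) (x, b) -> a = b) <->
   (forall u : Q * S,
      quandle_iso (@orbit_op _ E_op u) op (fun v => p (proj1_sig v)))).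
Proof.
move=> Hq Hc Hcoc; cbv zeta.
have Hlift := lift Hcoc.
split; split.
- move=> [gamma [gammainv [Hg Ht]]] x a b H.
  set f := fun u : Q * S => gammainv u.1 u.2.
  have inv : forall u v, lorbit (ext_op op theta) u v -> f u = f v.
    move=> u v; elim=> [|y v' _ IH|y v' w _ IH Heq] //.
      rewrite IH /f /ext_op /= Ht (proj1 (Hg _)) //.
    rewrite IH -Heq /f /ext_op /= Ht (proj1 (Hg _)) //.
  have := inv _ _ H; rewrite /f /= => e.
  by rewrite -[a](proj2 (Hg x)) e (proj2 (Hg x)).
- move=> H2.
  case: (classic (inhabited Q)) => [[q0]|nQ]; last first.
    exists (fun _ a => a), (fun _ a => a); split => //.
    move=> x; exfalso; exact: nQ (inhabits x).
  have ex1 : forall x a, exists b, lorbit (ext_op op theta) (q0, a) (x, b).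
    by move=> x a; apply: Hlift; apply: Hc.
  have ex2 : forall x b, exists a, lorbit (ext_op op theta) (x, b) (q0, a).
    by move=> x b; apply: Hlift; apply: Hc.
  pose gamma x a := proj1_sig (constructive_indefinite_description _ (ex1 x a)).
  pose gammainv x b := proj1_sig (constructive_indefinite_description _ (ex2 x b)).
  have g1 x a : lorbit (ext_op op theta) (q0, a) (x, gamma x a).
    exact: proj2_sig (constructive_indefinite_description _ (ex1 x a)).
  have g2 x b : lorbit (ext_op op theta) (x, b) (q0, gammainv x b).
    exact: proj2_sig (constructive_indefinite_description _ (ex2 x b)).
  exists gamma, gammainv; split.
    move=> x; split=> c.
      apply: H2; apply: lorbit_sym; apply: lorbit_trans (g1 x c) (g2 _ _).
    apply: H2; apply: lorbit_trans (lorbit_sym (g1 x _)) (lorbit_sym (g2 x c)).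
  move=> x y b; apply: (H2 (op x y)).
  apply: lorbit_trans (lorbit_sym (lorbit_L (x, b) (lorbit_refl _ (y, b)))) _.
  exact: lorbit_trans (g2 y b) (g1 _ _).
- move=> H2 u; split; last by [].
  have ex : forall x, exists b, lorbit (ext_op op theta) u (x, b).
    move=> x; case: u => [y a]; apply: Hlift; apply: Hc.
  pose g x : orbit_sub (ext_op op theta) u :=
    exist _ (x, proj1_sig (constructive_indefinite_description _ (ex x)))
      (proj2_sig (constructive_indefinite_description _ (ex x))).
  exists g => //.
  case=> [[x b] Hv] /=.
  have Hg := proj2_sig (constructive_indefinite_description _ (ex x)).
  move: Hg; set c := proj1_sig _ => Hg.
  rewrite /g /=.
  have e : c = b.
    apply: (H2 x); apply: lorbit_trans (lorbit_sym Hg) Hv.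
  move: (proj2_sig _); rewrite -/c.
  move: c e Hg => c e; subst c => Hg Hp.
  by rewrite (proof_irrelevance _ Hp Hv).
- move=> H3 x a b H.
  have [[f _ _] _] := H3 (x, a).
  have := @bij_inj _ _ _ (proj1 (H3 (x, a)))
    (exist _ (x, a) (lorbit_refl _ _)) (exist _ (x, b) H) erefl.
  by case.
Qed.
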